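(* Let $v\in\mathrm{Box}(\Sigma_+)$ with $\gamma^v$ and $\gamma^v(t)$ ($t\in\mathcal I(y^v)$) as in the context. (i) If $1\notin\mathcal I(y^v)$, then $\mathcal S^{es}_+(\gamma^v)=\mathcal S_+(\gamma^v)$. If $1\in\mathcal I(y^v)$, then $\gamma^v(1)=\gamma^v$ and $\mathcal S_+(\gamma^v)\setminus\mathcal S^{es}_+(\gamma^v)=\mathcal S_-(\gamma^v)\setminus\mathcal S^{es}_-(\gamma^v)$. (ii) For every $t\in\mathcal I(y^v)$, the images of $\mathcal S^{es}_+(\gamma^v)$ and $\mathcal S^{es}_-(\gamma^v(t))$ under the projection $p:\mathbb L\to\mathbb L/\langle h\rangle$ coincide.
   Context: $N\cong\mathbb Z^d$ lattice, $\mathcal A=\{v_1,\dots,v_n\}\subset N$ generating $N$ with a homomorphism $\mathrm h:N\to\mathbb Z$, $\mathrm h(v_j)=1$; $\mathbb L=\{l\in\mathbb Z^n:\sum l_jv_j=0\}$; fix $\beta\in N$. $\Sigma_\pm$ are the fans supported on $\mathbb R_{\ge0}\mathrm{Conv}(\mathcal A)$ of two regular triangulations with vertices in $\mathcal A$ joined by an edge of the secondary polytope; there is a circuit $I$ with primitive relation $h\in\mathbb L$, $I_\pm=\{v_j:\pm h_j>0\}$, such that (with $\mathcal F\subset\mathcal A\setminus I$ separating if $\mathcal F\cup(I\setminus\{v\})$ generates a maximal cone of $\Sigma_\pm$ for all $v\in I_\pm$) $\Sigma_-$ arises from $\Sigma_+$ by replacing the maximal cones $\mathcal F\cup(I\setminus\{v\})$,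 $v\in I_+$, by $\mathcal F\cup(I\setminus\{v\})$, $v\in I_-$, for all separating $\mathcal F$; those cones are the essential maximal cones $\Sigma^{es}_\pm(d)$. $\mathrm{Box}(\Sigma_+)$: $v=\sum q^v_jv_j\in N$, $0\le q^v_j<1$, $q^v_j=0$ unless $v_j$ spans a ray of a fixed maximal cone of $\Sigma_+$; $y^v_j=e^{2\pi iq^v_j}$. $\mathcal I(r)=\{t\in\mathbb C^*:r_jt^{h_j}=1$ for some $j$ with $v_j\in I_-\}$. For $v\in\mathrm{Box}(\Sigma_+)$ choose $\gamma^v\in\mathbb Q^n$ with $e^{2\pi i\gamma^v_j}=y^v_j$ and $\sum\gamma^v_jv_j=\beta$; for each $t\in\mathcal I(y^v)$ (a root of unity) fix $\theta_t\in\mathbb Q$ with $e^{2\pi i\theta_t}=t$, with $\theta_1=0$, and set $\gamma^v(t)=\gamma^v+\theta_th$. For a fan $\Sigma$ (one of $\Sigma_\pm$), $\gamma\in\mathbb Q^n$ and $l\in\mathbb L$, $\mathrm{Supp}(l)=\{v_j:l_j+\gamma_j\notin\mathbb Z_{\ge0}\}$; $\mathcal S_\pm(\gamma)$ is the set of $l\in\mathbb L$ such that all elements of $\mathrm{Supp}(l)$ generate rays of one maximal cone of $\Sigma_\pm$, and $\mathcal S^{es}_\pm(\gamma)$ the set of $l$ such that this holds for one essential maximal cone of $\Sigma_\pm$. *)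

(* Defs.v *)
(* Lattice N = Z^d, A = {v_j : j < n}, all linear algebra over rat. *)
From HB Require Import structures.
From mathcomp Require Import all_boot all_order all_algebra.
Set Implicit Arguments. Unset Strict Implicit. Unset Printing Implicit Defensive.
Import Order.TTheory GRing.Theory Num.Theory.
Local Open Scope ring_scope.

Section Defs.
Variables (d n : nat) (v : 'I_n -> 'I_d -> int).

Definition isZ (x : rat) : Prop := exists z : int, x = z%:~R.
Definition isN (x : rat) : Prop := exists k : nat, x = k%:R.

Definition generates : Prop :=
  forall x : 'I_d -> int, exists c : 'I_n -> int,
    forall i, x i = \sum_(j < n) c j * v j i.

Definition inL (l : 'I_n -> int) : Prop :=
  forall i, \sum_(j < n) l j * v j i = 0.

Definition lin_indep (S : {set 'I_n}) : Prop :=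
  forall c : 'I_n -> rat, (forall j, j \notin S -> c j = 0) ->
    (forall i, \sum_(j < n) c j * (v j i)%:~R = 0) -> forall j, c j = 0.

Definition evalf (phi : 'I_d -> rat) (x : 'I_d -> int) : rat :=
  \sum_(i < d) phi i * (x i)%:~R.

Definition in_cone (S : pred 'I_n) (x : 'I_d -> rat) : Prop :=
  exists c : 'I_n -> rat, [/\ forall j, 0 <= c j,
    forall j, ~~ S j -> c j = 0 &
    forall i, x i = \sum_(j < n) c j * (v j i)%:~R].

(* T (its set of maximal cones, given by index sets) is the fan of a regular
   triangulation of Conv(A) with vertices in A: the cells are exactly the
   lower facets (for a height w) which are simplices, and they cover
   R_{>=0} Conv(A). *)
Definition regular_triangulation (T : {set {set 'I_n}}) : Prop :=
  (exists w : 'I_n -> rat, forall s : {set 'I_n},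
     s \in T <-> [/\ #|s| = d, lin_indep s &
       exists phi : 'I_d -> rat,
         (forall j, j \in s -> evalf phi (v j) = w j) /\
         (forall j, j \notin s -> evalf phi (v j) < w j)])
  /\ (forall x, in_cone predT x -> exists2 s, s \in T & in_cone (mem s) x).

Definition is_circuit (I : {set 'I_n}) : Prop :=
  ~ lin_indep I /\ forall J : {set 'I_n}, J \proper I -> lin_indep J.

Definition primitive_relation (I : {set 'I_n}) (hr : 'I_n -> int) : Prop :=
  [/\ inL hr, forall j, (hr j != 0) = (j \in I) &
      forall (l : 'I_n -> int) (k : int), inL l ->
        (forall j, hr j = k * l j) -> k = 1 \/ k = -1].

Definition Iplus (I : {set 'I_n}) (hr : 'I_n -> int) : {set 'I_n} :=
  [set j in I | 0 < hr j].
Definition Iminus (I : {set 'I_n}) (hr : 'I_n -> int) : {set 'I_n} :=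
  [set j in I | hr j < 0].

Definition separating (Tp : {set {set 'I_n}}) (I : {set 'I_n}) (hr : 'I_n -> int)
  : {set {set 'I_n}} :=
  [set F : {set 'I_n} | [disjoint F & I] &&
     [forall w in Iplus I hr, (F :|: (I :\ w)) \in Tp]].

Definition ess_plus Tp I hr : {set {set 'I_n}} :=
  [set F :|: (I :\ w) | F in separating Tp I hr, w in Iplus I hr].
Definition ess_minus Tp I hr : {set {set 'I_n}} :=
  [set F :|: (I :\ w) | F in separating Tp I hr, w in Iminus I hr].

(* l in S(gamma) for the set T of (maximal) cones:
   Supp(l) = {j : l_j + gamma_j not in Z_{>=0}} lies in one cone of T *)
Definition inS (T : {set {set 'I_n}}) (g : 'I_n -> rat) (l : 'I_n -> int) : Prop :=
  inL l /\ exists2 s, s \in T & forall j, ~ isN ((l j)%:~R + g j) -> j \in s.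

(* the box element sum q_j v_j lies in N *)
Definition in_lattice (q : 'I_n -> rat) : Prop :=
  forall i, isZ (\sum_(j < n) q j * (v j i)%:~R).

(* t = e^{2 pi i theta} lies in I(y) with y_j = e^{2 pi i q_j}:
   y_j t^{h_j} = 1 for some j in I_-, i.e. q_j + h_j theta in Z *)
Definition in_Iy (I : {set 'I_n}) (hr : 'I_n -> int) (q : 'I_n -> rat) (theta : rat) : Prop :=
  exists2 j, j \in Iminus I hr & isZ (q j + (hr j)%:~R * theta).

End Defs.

(* Main.v *)
Require Import Defs.
From HB Require Import structures.
From mathcomp Require Import all_boot all_order all_algebra.
From mathcomp Require Import zify lra ring.
Import Order.TTheory GRing.Theory Num.Theory.
Local Open Scope ring_scope.
Set Implicit Arguments. Unset Strict Implicit.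

Section Helpers.
Variables (d n : nat) (v : 'I_n -> 'I_d -> int).

Lemma isZ_int (z : int) : isZ (z%:~R).
Proof. by exists z. Qed.

Lemma isZ_add x y : isZ x -> isZ y -> isZ (x + y).
Proof. by move=> [a ->] [b ->]; exists (a + b); rewrite intrD. Qed.

Lemma isZ_opp x : isZ x -> isZ (- x).
Proof. by move=> [a ->]; exists (- a); rewrite intrN. Qed.

Lemma isN_Z x : isN x -> isZ x.
Proof. by move=> [k ->]; exists (Posz k). Qed.

Lemma isZ_ge0 x : isZ x -> 0 <= x -> isN x.
Proof.
move=> [[k|k] ->] H; first by exists k.
by move: H; rewrite ler0z.
Qed.

Lemma li_sub (S J : {set 'I_n}) : lin_indep v S ->
  (forall j, j \in J -> j \in S) -> lin_indep v J.
Proof.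
move=> li sub c Hc Hs; apply: li => // j jS; apply: Hc; apply/negP => jJ.
by move: (sub _ jJ); rewrite (negbTE jS).
Qed.

Lemma lin_eval (h : 'I_n -> int) (Lh : inL v h) (phi : 'I_d -> rat) :
  \sum_(j < n) (h j)%:~R * evalf phi (v j) = 0.
Proof.
rewrite /evalf.
under eq_bigr => j _ do rewrite big_distrr /=.
rewrite exchange_big /=; apply: big1 => i _.
transitivity (phi i * (\sum_(j < n) h j * v j i)%:~R); last by rewrite Lh mulr0.
rewrite rmorph_sum big_distrr /=; apply: eq_bigr => j _; rewrite intrM; ring.
Qed.

Lemma inL_comb (l h : 'I_n -> int) (k : int) : inL v l -> inL v h ->
  inL v (fun j => l j + k * h j).
Proof.
move=> Ll Lh i; under eq_bigr => j _ do rewrite mulrDl -mulrA.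
by rewrite big_split /= Ll -big_distrr /= Lh mulr0 addr0.
Qed.

Lemma key T (J : {set 'I_n}) (h : 'I_n -> int) :
  regular_triangulation v T -> inL v h ->
  (forall j, (h j != 0) = (j \in J)) -> ~ lin_indep v J ->
  forall s1 s2, s1 \in T -> s2 \in T ->
  (forall j, h j < 0 -> j \in s1) -> (forall j, 0 < h j -> j \in s2) -> False.
Proof.
case=> [[w Hw] _] Lh supp nI s1 s2 s1T s2T neg1 pos2.
have [_ li1 [phi1 [E1 L1]]] := (Hw s1).1 s1T.
have [_ li2 [phi2 [E2 L2]]] := (Hw s2).1 s2T.
have [j1 /andP [hj1 j1s]] : exists j, (0 < h j) && (j \notin s1).
  case: (pickP [pred j | (0 < h j) && (j \notin s1)]) => [j Hj|H0]; first by exists j.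
  exfalso; apply: nI; apply: (li_sub li1) => j; rewrite -supp => hj.
  case: (ltrP (h j) 0) => [/neg1 //| hge].
  have hpos : 0 < h j by rewrite lt_neqAle eq_sym hj hge.
  by move: (H0 j) => /= /negbT; rewrite negb_and hpos /= negbK.
have [j2 /andP [hj2 j2s]] : exists j, (h j < 0) && (j \notin s2).
  case: (pickP [pred j | (h j < 0) && (j \notin s2)]) => [j Hj|H0]; first by exists j.
  exfalso; apply: nI; apply: (li_sub li2) => j; rewrite -supp => hj.
  case: (ltrP 0 (h j)) => [/pos2 //| hge].
  have hneg : h j < 0 by rewrite lt_neqAle hj hge.
  by move: (H0 j) => /= /negbT; rewrite negb_and hneg /= negbK.
set D := \sum_(j < n) (h j)%:~R * w j.
have eqD phi : D = \sum_(j < n) (h j)%:~R * (w j - evalf phi (v j)).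
  have L := lin_eval Lh phi.
  by rewrite /D; under [RHS]eq_bigr => j _ do rewrite mulrBr; rewrite sumrB L subr0.
have ge0 (s : {set 'I_n}) phi : (forall j, j \in s -> evalf phi (v j) = w j) ->
   (forall j, j \notin s -> evalf phi (v j) < w j) -> forall j, 0 <= w j - evalf phi (v j).
  move=> E L j; case: (boolP (j \in s)) => js; first by rewrite E // subrr.
  by rewrite subr_ge0 ltW // L.
have H1 : 0 < D.
  rewrite (eqD phi1) (bigD1 j1) //=.
  have a : 0 < (h j1)%:~R * (w j1 - evalf phi1 (v j1)).
    by apply: mulr_gt0; [rewrite ltr0z | rewrite subr_gt0 L1].
  have b : 0 <= \sum_(i < n | i != j1) (h i)%:~R * (w i - evalf phi1 (v i)).
    apply: sumr_ge0 => j _.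
    case: (ltrP (h j) 0) => hj; first by rewrite E1 ?subrr ?mulr0 // neg1.
    by apply: mulr_ge0; [rewrite ler0z | apply: (ge0 s1)].
  by apply: (lt_le_trans a); rewrite lerDl.
have H2 : D <= 0.
  rewrite (eqD phi2); apply: sumr_le0 => j _.
  case: (ltrP 0 (h j)) => hj; first by rewrite E2 ?subrr ?mulr0 // pos2.
  by apply: mulr_le0_ge0; [rewrite lerz0 | apply: (ge0 s2)].
by have := lt_le_trans H1 H2; rewrite ltxx.
Qed.

Lemma signs (J : {set 'I_n}) (h : 'I_n -> int) (hh : 'I_d -> int) :
  inL v h -> (forall j, (h j != 0) = (j \in J)) -> ~ lin_indep v J ->
  (forall j, \sum_(i < d) hh i * v j i = 1) ->
  (exists u, 0 < h u) /\ (exists w, h w < 0).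
Proof.
move=> Lh supp nI hhP.
have sum0 : \sum_(j < n) h j = 0.
  transitivity (\sum_(j < n) h j * \sum_(i < d) hh i * v j i);
    first by apply: eq_bigr => j _; rewrite hhP mulr1.
  under eq_bigr => j _ do rewrite big_distrr /=.
  rewrite exchange_big /=; apply: big1 => i _.
  transitivity (hh i * \sum_(j < n) h j * v j i); last by rewrite Lh mulr0.
  by rewrite big_distrr; apply: eq_bigr => j _ /=; ring.
have [j0 j0I] : exists j, j \in J.
  case: (set_0Vmem J) => [J0|[j jJ]]; last by exists j.
  by exfalso; apply: nI => c Hc _ j; apply: Hc; rewrite J0 inE.
have hj0 : h j0 != 0 by rewrite supp.
split.
- case: (pickP [pred u | 0 < h u]) => [u Hu|H0]; first by exists u.
  exfalso; have S : \sum_(j < n) - h j = 0 by rewrite sumrN sum0 oppr0.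
  have Hall : forall j, 0 <= - h j.
    by move=> j; rewrite oppr_ge0 leNgt; move: (H0 j) => /= ->.
  have := @psumr_eq0P _ _ xpredT _ (fun j _ => Hall j) S j0 isT.
  by move/eqP; rewrite oppr_eq0 (negbTE hj0).
- case: (pickP [pred u | h u < 0]) => [u Hu|H0]; first by exists u.
  exfalso.
  have Hall : forall j, 0 <= h j.
    by move=> j; rewrite leNgt; move: (H0 j) => /= ->.
  have := @psumr_eq0P _ _ xpredT _ (fun j _ => Hall j) sum0 j0 isT.
  by move/eqP; rewrite (negbTE hj0).
Qed.

End Helpers.

Theorem proposition4p6 (d n : nat) (v : 'I_n -> 'I_d -> int)
  (hh : 'I_d -> int) (beta : 'I_d -> int)
  (Tp Tm : {set {set 'I_n}}) (I : {set 'I_n}) (hr : 'I_n -> int) :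
  injective v -> generates v ->
  (forall j, \sum_(i < d) hh i * v j i = 1) ->
  regular_triangulation v Tp -> regular_triangulation v Tm -> Tp != Tm ->
  is_circuit v I -> primitive_relation v I hr ->
  Tm = (Tp :\: ess_plus Tp I hr) :|: ess_minus Tp I hr ->
  forall (s0 : {set 'I_n}) (q : 'I_n -> rat),
    s0 \in Tp -> (forall j, 0 <= q j < 1) -> (forall j, q j != 0 -> j \in s0) ->
    in_lattice v q ->
  forall g : 'I_n -> rat,
    (forall j, isZ (g j - q j)) ->
    (forall i, \sum_(j < n) g j * (v j i)%:~R = (beta i)%:~R) ->
  [/\ (~ in_Iy I hr q 0 ->
         forall l, inS v (ess_plus Tp I hr) g l <-> inS v Tp g l),
      (in_Iy I hr q 0 ->
         forall l, (inS v Tp g l /\ ~ inS v (ess_plus Tp I hr) g l) <->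
                   (inS v Tm g l /\ ~ inS v (ess_minus Tp I hr) g l)) &
      forall theta : rat, in_Iy I hr q theta ->
        let gt := fun j => g j + theta * (hr j)%:~R in
        (forall l, inS v (ess_plus Tp I hr) g l ->
           exists k : int, inS v (ess_minus Tp I hr) gt (fun j => l j + k * hr j)) /\
        (forall l, inS v (ess_minus Tp I hr) gt l ->
           exists k : int, inS v (ess_plus Tp I hr) g (fun j => l j + k * hr j))].
Proof.
move=> vinj gen hhP RTp RTm TpTm circ prim Tmeq s0 q s0Tp q01 qs0 qlat g gq gbeta.
case: circ => nI _; case: prim => Lh supp _.
have [[up hup] [wm hwm]] := signs Lh supp nI hhP.
have keyP := key RTp Lh supp nI.
have keyM := key RTm Lh supp nI.
have EmTm : forall s, s \in ess_minus Tp I hr -> s \in Tm.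
  by move=> s Hs; rewrite Tmeq in_setU Hs orbT.
have sepTp : forall F u, F \in separating Tp I hr -> 0 < hr u -> F :|: (I :\ u) \in Tp.
  move=> F u; rewrite inE => /andP [_ /forall_inP H] hu; apply: H.
  by rewrite inE -supp gt_eqF.
have EpTp : forall s, s \in ess_plus Tp I hr -> s \in Tp.
  by move=> s /imset2P [F u HF Hu ->]; apply: sepTp => //; move: Hu; rewrite inE => /andP [].
have Ep_mem : forall F u, F \in separating Tp I hr -> 0 < hr u ->
    F :|: (I :\ u) \in ess_plus Tp I hr.
  by move=> F u HF hu; apply/imset2P; exists F u => //; rewrite inE -supp gt_eqF.
have Em_mem : forall F u, F \in separating Tp I hr -> hr u < 0 ->
    F :|: (I :\ u) \in ess_minus Tp I hr.
  by move=> F u HF hu; apply/imset2P; exists F u => //; rewrite inE -supp lt_eqF.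
have negsub : forall F u j, 0 < hr u -> hr j < 0 -> j \in F :|: (I :\ u).
  move=> F u j hu hj; rewrite !inE -supp (lt_eqF hj) andbT; apply/orP; right.
  by apply/negP => /eqP eju; rewrite eju in hj; have := lt_trans hj hu; rewrite ltxx.
have possub : forall F u j, hr u < 0 -> 0 < hr j -> j \in F :|: (I :\ u).
  move=> F u j hu hj; rewrite !inE -supp (gt_eqF hj) andbT; apply/orP; right.
  by apply/negP => /eqP eju; rewrite eju in hj; have := lt_trans hj hu; rewrite ltxx.
have [F0 HF0] : exists F, F \in separating Tp I hr.
  case: (pickP (mem (separating Tp I hr))) => [F HF|H0]; first by exists F.
  exfalso; move/eqP: TpTm; apply.
  have e1 : ess_plus Tp I hr = set0.
    apply/setP => x; rewrite inE; apply/negP => /imset2P [F u HF _ _].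
    by move: (H0 F); rewrite /= HF.
  have e2 : ess_minus Tp I hr = set0.
    apply/setP => x; rewrite inE; apply/negP => /imset2P [F u HF _ _].
    by move: (H0 F); rewrite /= HF.
  by rewrite Tmeq e1 e2 setD0 setU0.
split.
- move=> nIy l; split.
    by case=> Ll [s /EpTp sT Hs]; split => //; exists s.
  case=> Ll [s sT Hs].
  have negs : forall j, hr j < 0 -> j \in s.
    move=> j hj; apply: Hs => HN; apply: nIy; exists j.
      by rewrite inE -supp (lt_eqF hj) hj.
    have -> : q j + (hr j)%:~R * 0 = ((l j)%:~R + g j) + (- (l j)%:~R) + (- (g j - q j)).
      by ring.
    by apply: isZ_add; [apply: isZ_add; [apply: isN_Z | apply: isZ_opp; apply: isZ_int]
                       | apply: isZ_opp].
  case: (boolP (s \in ess_plus Tp I hr)) => sE; first by split=> //; exists s.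
  exfalso.
  have sTm : s \in Tm by rewrite Tmeq in_setU in_setD sE sT.
  apply: (keyM s (F0 :|: (I :\ wm)) sTm _ negs).
    by apply: EmTm; apply: Em_mem.
  by move=> j hj; apply: possub.
- move=> _ l; split.
  + case=> [[Ll [s sT Hs]] nE].
    have sE : s \notin ess_plus Tp I hr.
      by apply/negP => sE; apply: nE; split => //; exists s.
    split; first by split => //; exists s => //; rewrite Tmeq in_setU in_setD sE sT.
    case=> _ [s2 /imset2P [F w HF Hw ->] Hs2].
    have [u /andP [hu us]] : exists u, (0 < hr u) && (u \notin s).
      case: (pickP [pred u | (0 < hr u) && (u \notin s)]) => [u Hu|H0]; first by exists u.
      exfalso; apply: (keyP (F :|: (I :\ up)) s _ sT).
      * by apply: sepTp.
      * by move=> j hj; apply: negsub.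
      * move=> j hj; move: (H0 j) => /= /negbT; rewrite negb_and hj /= negbK; exact.
    apply: nE; split => //; exists (F :|: (I :\ u)); first exact: Ep_mem.
    move=> j Hj; have := Hs2 j Hj; have := Hs j Hj; rewrite !inE.
    move=> js /orP [->//| /andP [_ jI]]; rewrite jI andbT; apply/orP; right.
    by apply/negP => /eqP eju; move: us; rewrite -eju js.
  + case=> [[Ll [s sT Hs]] nE].
    have sE : s \notin ess_minus Tp I hr.
      by apply/negP => sE; apply: nE; split => //; exists s.
    have sTp : s \in Tp.
      by move: sT; rewrite Tmeq in_setU (negbTE sE) orbF in_setD => /andP [].
    split; first by split => //; exists s.
    case=> _ [s2 /imset2P [F u HF Hu ->] Hs2].
    have [w /andP [hw ws]] : exists w, (hr w < 0) && (w \notin s).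
      case: (pickP [pred w | (hr w < 0) && (w \notin s)]) => [w Hw'|H0]; first by exists w.
      exfalso; apply: (keyM s (F :|: (I :\ wm)) sT).
      * by apply: EmTm; apply: Em_mem.
      * move=> j hj; move: (H0 j) => /= /negbT; rewrite negb_and hj /= negbK; exact.
      * by move=> j hj; apply: possub.
    apply: nE; split => //; exists (F :|: (I :\ w)); first exact: Em_mem.
    move=> j Hj; have := Hs2 j Hj; have := Hs j Hj; rewrite !inE.
    move=> js /orP [->//| /andP [_ jI]]; rewrite jI andbT; apply/orP; right.
    by apply/negP => /eqP eju; move: ws; rewrite -eju js.
- move=> theta [j1 j1m Hz] gt; split.
  + move=> l [Ll [s /imset2P [F u HF Hu ->] Hs]].
    move: j1m; rewrite inE => /andP [j1I hj1].
    have [m Hm] : isZ ((l j1)%:~R + g j1 + theta * (hr j1)%:~R).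
      have -> : (l j1)%:~R + g j1 + theta * (hr j1)%:~R
          = (l j1)%:~R + (g j1 - q j1) + (q j1 + (hr j1)%:~R * theta) by ring.
      by apply: isZ_add => //; apply: isZ_add => //; apply: isZ_int.
    exists (- `|m|); split; first exact: inL_comb.
    exists (F :|: (I :\ j1)); first exact: Em_mem.
    move=> j /= Hj; rewrite !inE; case: (boolP (j \in I)) => jI.
      rewrite andbT; apply/orP; right; apply/negP => /eqP ej; subst j; apply: Hj.
      have -> : ((l j1 + - `|m| * hr j1)%:~R + gt j1 : rat) = (m + - `|m| * hr j1)%:~R.
        by rewrite [RHS]intrD -Hm intrD /gt; ring.
      by apply: isZ_ge0; [apply: isZ_int | rewrite ler0z; nia].
    have hj0 : hr j = 0 by apply/eqP; rewrite -[_ == _]negbK supp.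
    rewrite andbF orbF.
    have := Hs j; rewrite !inE (negbTE jI) andbF orbF; apply.
    by move: Hj; rewrite /gt hj0 !mulr0 addr0 addr0.
  + move=> l [Ll [s /imset2P [F w HF Hw ->] Hs]].
    have [u /andP [hu us0]] : exists u, (0 < hr u) && (u \notin s0).
      case: (pickP [pred u | (0 < hr u) && (u \notin s0)]) => [u Hu|H0]; first by exists u.
      exfalso; apply: (keyP (F :|: (I :\ up)) s0 _ s0Tp).
      * by apply: sepTp.
      * by move=> j hj; apply: negsub.
      * move=> j hj; move: (H0 j) => /= /negbT; rewrite negb_and hj /= negbK; exact.
    have qu : q u = 0.
      by case: (eqVneq (q u) 0) => // /qs0; rewrite (negbTE us0).
    have [m Hm] : isZ ((l u)%:~R + g u).
      have -> : (l u)%:~R + g u = (l u)%:~R + (g u - q u) by rewrite qu subr0.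
      by apply: isZ_add => //; apply: isZ_int.
    exists `|m|; split; first exact: inL_comb.
    exists (F :|: (I :\ u)); first exact: Ep_mem.
    move=> j /= Hj; rewrite !inE; case: (boolP (j \in I)) => jI.
      rewrite andbT; apply/orP; right; apply/negP => /eqP ej; subst j; apply: Hj.
      have -> : ((l u + `|m| * hr u)%:~R + g u : rat) = (m + `|m| * hr u)%:~R.
        by rewrite [RHS]intrD -Hm intrD; ring.
      by apply: isZ_ge0; [apply: isZ_int | rewrite ler0z; nia].
    have hj0 : hr j = 0 by apply/eqP; rewrite -[_ == _]negbK supp.
    rewrite andbF orbF.
    have := Hs j; rewrite !inE (negbTE jI) andbF orbF; apply.
    by move: Hj; rewrite /gt hj0 !mulr0 addr0 addr0.
Qed.
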